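(* Let $f:G\to H$ be a group homomorphism with $H$ nontrivial. (1) If $H$ is torsion free, then $f$ is locally sectionable if and only if $f$ is surjective. (2) If $H$ is a torsion group, then $f$ is locally sectionable if and only if for each $b\in H$ there exists $a\in G$ with $f(a)=b$ and $o(a)=o(b)$.
   Context: $o(g)$ denotes the order of an element $g$. For a homomorphism $f:G\to H$ and a subgroup $L\le H$, a local section of $f$ on $L$ is a homomorphism $s:L\to G$ with $f\circ s=\mathrm{incl}_L$, where $\mathrm{incl}_L:L\hookrightarrow H$ is the inclusion. The homomorphism $f$ is called locally sectionable if for every $b\in H$ with $b\neq 1$ there is a subgroup $L\le H$ with $b\in L$ such that $f$ admits a local section on $L$. *)

(* Defs.v *)
From HB Require Import structures.
From mathcomp Require Import all_boot.
From Stdlib Require Import ClassicalEpsilon.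
Set Implicit Arguments. Unset Strict Implicit. Unset Printing Implicit Defensive.

Local Open Scope group_scope.

(* Order of an element: the least n > 0 with g ^+ n = 1, and 0 if there is
   no such n (i.e. 0 encodes infinite order). *)
Definition elt_order (G : groupType) (g : G) : nat :=
  match excluded_middle_informative (exists n, (0 < n)%N && (g ^+ n == 1)) with
  | left P => ex_minn P
  | right _ => 0%N
  end.

Definition is_subgroup (H : groupType) (L : H -> Prop) : Prop :=
  [/\ L 1, (forall x y, L x -> L y -> L (x * y)) & (forall x, L x -> L x^-1)].

(* s is a local section of f on L: a homomorphism L -> G (s is only relevant on L)
   with f (s x) = x for x in L. *)
Definition local_section (G H : groupType) (f : G -> H) (L : H -> Prop)
    (s : H -> G) : Prop :=
  (forall x y, L x -> L y -> s (x * y) = s x * s y) /\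
  (forall x, L x -> f (s x) = x).

Definition locally_sectionable (G H : groupType) (f : G -> H) : Prop :=
  forall b : H, b <> 1 ->
    exists L : H -> Prop, [/\ is_subgroup L, L b & exists s, local_section f L s].

Definition torsion_free (H : groupType) : Prop :=
  forall h : H, h <> 1 -> forall n, (0 < n)%N -> h ^+ n <> 1.

Definition torsion_group (H : groupType) : Prop :=
  forall h : H, exists n, (0 < n)%N /\ h ^+ n = 1.

(* Main.v *)
Require Import Defs.
From HB Require Import structures.
From mathcomp Require Import all_boot.
From Stdlib Require Import ClassicalEpsilon.
Set Implicit Arguments. Unset Strict Implicit.
Local Open Scope group_scope.

Section Aux.

Lemma sq_eq1 (G : groupType) (x : G) : x * x = x -> x = 1.
Proof. by move=> h; apply: (@mulgI _ x); rewrite mulg1. Qed.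

Lemma powF (G : groupType) (g : G) n k k' :
  g ^+ n * (g ^+ k)^-1 * g ^+ (k + k') = g ^+ (n + k').
Proof. by rewrite expgnDr mulgA mulgVK -expgnDr. Qed.

Lemma powEq (G : groupType) (g : G) n k n' k' :
  g ^+ n * (g ^+ k)^-1 = g ^+ n' * (g ^+ k')^-1 <->
  g ^+ (n + k') = g ^+ (n' + k).
Proof.
split=> [E|E].
  by rewrite -(powF g n k k') E addnC powF.
apply: (@mulIg _ (g ^+ (k + k'))).
by rewrite powF [(k + k')%N]addnC powF E.
Qed.

Lemma powMul (G : groupType) (g : G) n k n' k' :
  g ^+ n * (g ^+ k)^-1 * (g ^+ n' * (g ^+ k')^-1) =
  g ^+ (n + n') * (g ^+ (k + k'))^-1.
Proof.
have C : commute (g ^+ k)^-1 (g ^+ n').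
  apply: commute_sym; apply: commuteV; exact: commuteX2 (commute_refl g).
rewrite mulgA -(mulgA (g ^+ n)) C mulgA -expgnDr -mulgA; congr (_ * _).
by rewrite -invgM -expgnDr addnC.
Qed.

Lemma powSub (G : groupType) (g : G) i j : i <= j ->
  (g ^+ i = g ^+ j <-> g ^+ (j - i) = 1).
Proof.
move=> le; rewrite -(subnKC le) expgnDr addKn.
split=> [E|E]; last by rewrite E mulg1.
by apply: (@mulgI _ (g ^+ i)); rewrite mulg1 -E.
Qed.

Lemma P_from (G H : groupType) (a : G) (b : H) :
  (forall d, b ^+ d = 1 -> a ^+ d = 1) ->
  forall i j, b ^+ i = b ^+ j -> a ^+ i = a ^+ j.
Proof.
move=> h i j; case: (leqP i j) => [le|/ltnW le].
  by move/(powSub _ le)/h/(powSub _ le).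
by move/esym/(powSub _ le)/h/(powSub _ le)/esym.
Qed.

Variables (G H : groupType) (f : G -> H) (fM : {morph f : x y / x * y}).

Lemma f1 : f 1 = 1.
Proof. by apply: sq_eq1; rewrite -fM mulg1. Qed.

Lemma fX x n : f (x ^+ n) = f x ^+ n.
Proof. elim: n => [|n IH]; first exact: f1. by rewrite !expgS fM IH. Qed.

Lemma fV x : f x^-1 = (f x)^-1.
Proof. by apply/esym/mulg1_eq; rewrite -fM mulgV f1. Qed.

Lemma gen_section (a : G) (b : H) : f a = b ->
  (forall i j, b ^+ i = b ^+ j -> a ^+ i = a ^+ j) ->
  exists L : H -> Prop, [/\ is_subgroup L, L b & exists s, local_section f L s].
Proof.
move=> fab P.
pose L := fun x : H => exists nk : nat * nat, x = b ^+ nk.1 * (b ^+ nk.2)^-1.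
pose s := fun x : H =>
  match excluded_middle_informative (L x) with
  | left E => let nk := proj1_sig (constructive_indefinite_description _ E) in
              a ^+ nk.1 * (a ^+ nk.2)^-1
  | right _ => 1 end.
have sE n k : s (b ^+ n * (b ^+ k)^-1) = a ^+ n * (a ^+ k)^-1.
  rewrite /s; case: excluded_middle_informative => [E|N]; last first.
    by exfalso; apply: N; exists (n, k).
  case: (constructive_indefinite_description _ E) => [[n' k']] /= e.
  by apply/powEq/P/powEq.
exists L; split.
- split.
  + by exists (0, 0)%N; rewrite /= invg1 mulg1.
  + move=> x y [[n k] ->] [[n' k'] ->]; exists (n + n', k + k')%N.
    exact: powMul.
  + move=> x [[n k] ->]; exists (k, n); by rewrite /= invgM invgK.
- by exists (1, 0)%N; rewrite /= invg1 mulg1.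
- exists s; split.
  + move=> x y [[n k] ->] [[n' k'] ->].
    by rewrite powMul !sE powMul.
  + move=> x [[n k] ->]; by rewrite sE fM fV !fX fab.
Qed.

End Aux.

Lemma elt_orderP (G : groupType) (g : G) :
  (exists n, (0 < n)%N /\ g ^+ n = 1) ->
  [/\ (0 < elt_order g)%N, g ^+ elt_order g = 1 &
      forall n, (0 < n)%N -> g ^+ n = 1 -> (elt_order g <= n)%N].
Proof.
move=> [n [n0 gn]]; rewrite /elt_order.
case: excluded_middle_informative => [E|N]; last first.
  by exfalso; apply: N; exists n; rewrite n0 gn eqxx.
case: ex_minnP => m /andP[m0 /eqP gm] mn; split=> // k k0 gk.
by apply: mn; rewrite k0 gk eqxx.
Qed.

Lemma elt_order_pos (G : groupType) (g : G) :
  (0 < elt_order g)%N -> g ^+ elt_order g = 1.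
Proof.
rewrite /elt_order; case: excluded_middle_informative => // E _.
by case: ex_minnP => m /andP[_ /eqP].
Qed.

Lemma elt_order_ext (G H : groupType) (g : G) (h : H) :
  (forall n, (0 < n)%N -> (g ^+ n = 1 <-> h ^+ n = 1)) ->
  elt_order g = elt_order h.
Proof.
move=> e; rewrite /elt_order.
case: excluded_middle_informative => [E|N];
  case: excluded_middle_informative => [E'|N'] //.
- apply: eq_ex_minn => n; case n0: (0 < n)%N => //=.
  by apply/eqP/eqP => /(e _ n0).
- exfalso; apply: N'; case: E => n /andP[n0 /eqP gn].
  by exists n; rewrite n0; apply/eqP/(e _ n0).
- exfalso; apply: N; case: E' => n /andP[n0 /eqP gn].
  by exists n; rewrite n0; apply/eqP/(e _ n0).
Qed.

Lemma ord_dvd (G : groupType) (g : G) d :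
  (exists n, (0 < n)%N /\ g ^+ n = 1) ->
  (g ^+ d = 1 <-> (elt_order g %| d)%N).
Proof.
move=> /elt_orderP [m0 gm mn]; set m := elt_order g in m0 gm mn *.
split=> [gd|/dvdnP [q ->]]; last by rewrite mulnC expgnA gm expg1n.
have : g ^+ (d %% m) = 1.
  move: gd; rewrite {1}(divn_eq d m) expgnDr mulnC expgnA gm expg1n mul1g.
  by [].
move=> gr; rewrite /dvdn; apply/eqP.
case r0: (0 < d %% m)%N.
  by have := mn _ r0 gr; rewrite leqNgt ltn_pmod.
by move: r0; rewrite lt0n => /negbFE/eqP.
Qed.

Theorem lemma2p4 (G H : groupType) (f : G -> H)
    (fM : {morph f : x y / x * y}) (Hnt : exists h : H, h <> 1) :
  (torsion_free H -> (locally_sectionable f <-> forall b : H, exists a : G, f a = b)) /\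
  (torsion_group H ->
     (locally_sectionable f <->
      forall b : H, exists a : G, f a = b /\ elt_order a = elt_order b)).
Proof.
split=> Htor; split.
- move=> LS b; have [->|nb] := eqVneq b 1; first by exists 1; exact: f1.
  have [L [_ Lb [s [_ fs]]]] := LS b (elimN eqP nb).
  by exists (s b); apply: fs.
- move=> surj b nb; have [a fab] := surj b.
  apply: (gen_section fM fab); apply: P_from => d bd.
  case: d bd => [|d] bd; first by [].
  by exfalso; apply: (Htor b nb d.+1).
- move=> LS b; have [->|nb] := eqVneq b 1.
    by exists (1 : G); split; [exact: (f1 fM)|apply: elt_order_ext => n _; rewrite !expg1n].
  have [L [[L1 LM LV] Lb [s [sM fs]]]] := LS b (elimN eqP nb).
  have s1 : s 1 = 1 by apply: sq_eq1; rewrite -sM ?mulg1.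
  have Lp n : L (b ^+ n) by elim: n => [|n IH] //; rewrite expgS; apply: LM.
  have sp n : s (b ^+ n) = s b ^+ n.
    by elim: n => [|n IH] //; rewrite !expgS sM ?IH.
  exists (s b); split; first exact: fs.
  apply: elt_order_ext => n _; split=> e.
    by rewrite -(fs b Lb) -(fX fM) e (f1 fM).
  by rewrite -sp e.
- move=> hyp b nb; have [a [fab oab]] := hyp b.
  have tb := Htor b.
  have ta : exists n, (0 < n)%N /\ a ^+ n = 1.
    have [n0 _ _] := elt_orderP tb.
    rewrite -oab in n0.
    by exists (elt_order a); split => //; apply: elt_order_pos.
  apply: (gen_section fM fab); apply: P_from => d.
  by move/(ord_dvd _ tb); rewrite -oab => /(ord_dvd _ ta).
Qed.
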